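(* Let $(Y,\preceq,\prec,\to)$ be a solid vector space and let $\tau$ be its order topology. Then: (i) for a sequence $(x_n)$ in $Y$ and $x\in Y$, $x_n\to x$ in $\tau$ if and only if for every $c\succ0$ there exists $N\in\mathbb N$ such that $x-c\prec x_n\prec x+c$ for all $n>N$; (ii) $x_n\to x$ implies that $x_n\to x$ in $\tau$.
   Context: Vector space with convergence: a real vector space $Y$ with a relation $\to$ between sequences in $Y$ and points of $Y$ (uniqueness of limits not assumed) such that (C1) $x_n\to x$, $y_n\to y$ imply $x_n+y_n\to x+y$; (C2) $x_n\to x$, $\lambda\in\mathbb R$ imply $\lambda x_n\to\lambda x$; (C3) $\lambda_n\to\lambda$ in $\mathbb R$ imply $\lambda_n x\to\lambda x$. $A\subseteq Y$ is open if $x_n\to x\in A$ implies $x_n\in A$ for all but finitely many $n$; closed if $x_n\to x$, $x_n\in A$ $\forall n$ imply $x\in A$; $A^\circ$ is the union of all open subsets of $A$. A cone is a nonempty closed $K$ with $\lambda K\subseteq K$ ($\lambda\ge0$), $K+K\subseteq K$, $K\cap(-K)=\{0\}$; solid if $K\neq\{0\}$, $K^\circ\ne\emptyset$. A vector ordering is a partial order $\preceq$ with (V1) $x\preceq y\Rightarrow x+z\preceq y+z$; (V2) $\lambda\ge0$, $x\preceq y\Rightarrow\lambda x\preceq\lambda y$; (V3) $x_n\to x$, $y_n\to y$, $x_n\preceq y_n$ $\forall n\Rightarrow x\preceq y$. Solid vector space: positive cone $K=\{x:x\succeq0\}$ solid, with $x\prec y$ iff $y-x\in K^\circ$. The order topology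 $\tau$ on a solid vector space is the topology with basis the open intervals $(a,b)=\{x: a\prec x\prec b\}$, $a\prec b$. *)

(* Defs.v *)
From HB Require Import structures.
From mathcomp Require Import all_boot all_order all_algebra.
From mathcomp Require Import all_classical all_reals all_analysis.
Set Implicit Arguments. Unset Strict Implicit. Unset Printing Implicit Defensive.
Import Order.TTheory GRing.Theory Num.Theory.
Import numFieldNormedType.Exports.
Local Open Scope classical_set_scope.
Local Open Scope ring_scope.

Section VSC.
Variables (R : realType) (Y : lmodType R).
Variable conv : (nat -> Y) -> Y -> Prop.

Definition vector_space_with_convergence : Prop :=
  [/\ (forall (u v : nat -> Y) (x y : Y), conv u x -> conv v y ->
          conv (fun n => u n + v n) (x + y)),
      (forall (u : nat -> Y) (x : Y) (l : R), conv u x ->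
          conv (fun n => l *: u n) (l *: x)) &
      (forall (lam : nat -> R) (l : R) (x : Y), lam @ \oo --> l ->
          conv (fun n => lam n *: x) (l *: x))].

Definition conv_open (A : Y -> Prop) : Prop :=
  forall (u : nat -> Y) (x : Y), conv u x -> A x ->
    exists N : nat, forall n : nat, (N <= n)%N -> A (u n).

Definition conv_closed (A : Y -> Prop) : Prop :=
  forall (u : nat -> Y) (x : Y), conv u x -> (forall n, A (u n)) -> A x.

Definition conv_interior (A : Y -> Prop) (x : Y) : Prop :=
  exists U : Y -> Prop, [/\ conv_open U, (forall y, U y -> A y) & U x].

Definition is_cone (K : Y -> Prop) : Prop :=
  [/\ (exists x, K x), conv_closed K,
      (forall (l : R) (x : Y), 0 <= l -> K x -> K (l *: x)),
      (forall x y, K x -> K y -> K (x + y)) &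
      (forall x, K x -> K (- x) -> x = 0)].

Definition is_solid_cone (K : Y -> Prop) : Prop :=
  [/\ is_cone K, (exists x, K x /\ x <> 0) & (exists x, conv_interior K x)].

Variable le : Y -> Y -> Prop.

Definition is_vector_ordering : Prop :=
  [/\ (forall x, le x x) /\
        (forall x y, le x y -> le y x -> x = y) /\
        (forall x y z, le x y -> le y z -> le x z),
      (forall x y z, le x y -> le (x + z) (y + z)),
      (forall (l : R) x y, 0 <= l -> le x y -> le (l *: x) (l *: y)) &
      (forall (u v : nat -> Y) x y, conv u x -> conv v y ->
          (forall n, le (u n) (v n)) -> le x y)].

Definition pos_cone (x : Y) : Prop := le 0 x.

Definition slt (x y : Y) : Prop := conv_interior pos_cone (y - x).

Definition solid_vector_space : Prop :=
  [/\ vector_space_with_convergence, is_vector_ordering & is_solid_cone pos_cone].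

Definition open_interval (a b : Y) (x : Y) : Prop := slt a x /\ slt x b.

Definition order_open (U : Y -> Prop) : Prop :=
  forall x, U x -> exists a b, [/\ slt a b, open_interval a b x &
                               (forall y, open_interval a b y -> U y)].

Definition order_conv (u : nat -> Y) (x : Y) : Prop :=
  forall U, order_open U -> U x -> exists N : nat, forall n, (N <= n)%N -> U (u n).

End VSC.

(* Main.v *)
Require Import Defs.
From HB Require Import structures.
From mathcomp Require Import all_boot all_order all_algebra.
From mathcomp Require Import all_classical all_reals all_analysis.
Import Order.TTheory GRing.Theory Num.Theory.
Import numFieldNormedType.Exports.
Local Open Scope classical_set_scope.
Local Open Scope ring_scope.
Set Implicit Arguments. Unset Strict Implicit.

Lemma cst_conv (R : realType) (Y : lmodType R)
    (conv : (nat -> Y) -> Y -> Prop) (le : Y -> Y -> Prop)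
    (HY : solid_vector_space conv le) (k : Y) : conv (fun _ => k) k.
Proof.
case: HY => [[_ _ C3] _ _].
have h : ((fun _ : nat => (1:R)) n @[n --> \oo] --> (1:R))%classic by apply: cvg_cst.
have := C3 (fun=> 1) 1 k h.
by rewrite scale1r.
Qed.

Lemma int_eventually (R : realType) (Y : lmodType R)
    (conv : (nat -> Y) -> Y -> Prop) (K : Y -> Prop) (w : nat -> Y) (z : Y) :
  conv_interior conv K z -> conv w z ->
  exists N, forall n, (N <= n)%N -> conv_interior conv K (w n).
Proof.
move=> [U [oU sU Uz]] cw.
have [N HN] := oU _ _ cw Uz.
by exists N => n /HN Un; exists U.
Qed.

Lemma int_sub (R : realType) (Y : lmodType R)
    (conv : (nat -> Y) -> Y -> Prop) (K : Y -> Prop) (z : Y) :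
  conv_interior conv K z -> K z.
Proof. by move=> [U [_ sU Uz]]; apply: sU. Qed.

Lemma int_add (R : realType) (Y : lmodType R)
    (conv : (nat -> Y) -> Y -> Prop) (le : Y -> Y -> Prop)
    (HY : solid_vector_space conv le) (p k : Y) :
  conv_interior conv (pos_cone le) p -> pos_cone le k ->
  conv_interior conv (pos_cone le) (p + k).
Proof.
move=> [U [oU sU Up]] Kk.
have HY' := HY; case: HY' => [[C1 C2 C3] _ [[_ _ _ Kadd _] _ _]].
exists (fun y => U (y - k)); split.
- move=> w z cw Uz.
  have cw' := C1 _ _ _ _ cw (cst_conv HY (- k)).
  exact: (oU _ _ cw' Uz).
- move=> y /sU Ky; have := Kadd _ _ Ky Kk; by rewrite subrK.
- by rewrite addrK.
Qed.

Lemma int_scale (R : realType) (Y : lmodType R)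
    (conv : (nat -> Y) -> Y -> Prop) (le : Y -> Y -> Prop)
    (HY : solid_vector_space conv le) (s : R) (p : Y) : 0 < s ->
  conv_interior conv (pos_cone le) p ->
  conv_interior conv (pos_cone le) (s *: p).
Proof.
move=> s0 [U [oU sU Up]].
have HY' := HY; case: HY' => [[C1 C2 C3] _ [[_ _ Kscale _ _] _ _]].
have sn0 : s != 0 by rewrite gt_eqF.
exists (fun y => U (s^-1 *: y)); split.
- move=> w z cw Uz.
  exact: (oU _ _ (C2 _ _ s^-1 cw) Uz).
- move=> y /sU Ky; have := Kscale s _ (ltW s0) Ky.
  by rewrite scalerA mulfV // scale1r.
- by rewrite scalerA mulVf // scale1r.
Qed.

Lemma slt_trans (R : realType) (Y : lmodType R)
    (conv : (nat -> Y) -> Y -> Prop) (le : Y -> Y -> Prop)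
    (HY : solid_vector_space conv le) (a y b : Y) :
  slt conv le a y -> slt conv le y b -> slt conv le a b.
Proof.
rewrite /slt => Hay Hyb.
have := int_add HY Hyb (int_sub Hay).
by rewrite addrA subrK.
Qed.

Unset Implicit Arguments.

Theorem theorem6p5 (R : realType) (Y : lmodType R)
    (conv : (nat -> Y) -> Y -> Prop) (le : Y -> Y -> Prop)
    (HY : solid_vector_space conv le) :
  (forall (u : nat -> Y) (x : Y),
      order_conv conv le u x <->
      (forall c : Y, slt conv le 0 c ->
         exists N : nat, forall n : nat, (N < n)%N ->
           slt conv le (x - c) (u n) /\ slt conv le (u n) (x + c))) /\
  (forall (u : nat -> Y) (x : Y), conv u x -> order_conv conv le u x).
Proof.
have HY' := HY; case: HY' => [[C1 C2 C3] _ [[_ _ Kscale Kadd _] _ _]].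
have eqv : forall (u : nat -> Y) (x : Y),
      order_conv conv le u x <->
      (forall c : Y, slt conv le 0 c ->
         exists N : nat, forall n : nat, (N < n)%N ->
           slt conv le (x - c) (u n) /\ slt conv le (u n) (x + c)).
  move=> u x; split.
  - move=> Hc c c0.
    have c0' : conv_interior conv (pos_cone le) c by move: c0; rewrite /slt subr0.
    have [||N HN] := Hc (open_interval conv le (x - c) (x + c)).
    + move=> y [H1 H2]; exists (x - c), (x + c); split => //.
      have T := slt_trans HY H1 H2. exact: T.
    + split; rewrite /slt.
      * by rewrite opprB addrC subrK.
      * by rewrite [x + c]addrC addrK.
    + by exists N => n /ltnW /HN.
  - move=> Hc U oU Ux.
    have [a [b [_ [Hax Hxb] sU]]] := oU x Ux.
    set p := x - a; set q := b - x.
    have Hp : conv_interior conv (pos_cone le) p by [].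
    have Hq : conv_interior conv (pos_cone le) q by [].
    have cs := C3 _ 0 p (@cvg_harmonic R).
    have cs2 := C2 _ _ (-1) cs.
    have cs3 := C1 _ _ _ _ (cst_conv HY q) cs2.
    rewrite scale0r scaler0 addr0 in cs3.
    have [M HM] := int_eventually Hq cs3.
    have HMq := int_sub (HM M (leqnn M)).
    set s := harmonic M in HMq.
    have s0 : 0 < s by apply: harmonic_gt0.
    have s1 : s <= 1.
      rewrite /s /harmonic /= invr_le1 ?ler1n ?ltr0n //.
      exact: unitf_gt0.
    set c := s *: p.
    have Hc0 : slt conv le 0 c by rewrite /slt subr0; apply: int_scale.
    have Kpc : pos_cone le (p - c).
      have -> : p - c = (1 - s) *: p by rewrite scalerBl scale1r.
      by apply: Kscale; [rewrite subr_ge0|apply: int_sub Hp].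
    have Kqc : pos_cone le (q - c) by move: HMq; rewrite scaleN1r.
    have e : forall y z w : Y, y - z + (z - w) = y - w.
      by move=> y z w; rewrite addrA subrK.
    have [N HN] := Hc c Hc0.
    exists N.+1 => n /HN [H1 H2]; apply: sU; split.
    + have Kpc' : pos_cone le ((x - c) - a) by move: Kpc; rewrite /p addrAC.
      have := int_add HY H1 Kpc'.
      by rewrite /slt e.
    + have Kqc' : pos_cone le (b - (x + c)) by move: Kqc; rewrite /q opprD addrA.
      have := int_add HY H2 Kqc'.
      by rewrite /slt addrC e.
split => // u x cu; apply/eqv => c c0.
have c0' : conv_interior conv (pos_cone le) c by move: c0; rewrite /slt subr0.
have cA := C1 _ _ _ _ (C1 _ _ _ _ cu (cst_conv HY (- x))) (cst_conv HY c).
have cB := C1 _ _ _ _ (C1 _ _ _ _ (C2 _ _ (-1) cu) (cst_conv HY x)) (cst_conv HY c).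
rewrite subrr add0r in cA.
rewrite [-1 *: x]scaleN1r addNr add0r in cB.
have [N1 H1] := int_eventually c0' cA.
have [N2 H2] := int_eventually c0' cB.
exists (maxn N1 N2) => n; rewrite gtn_max => /andP[/ltnW/H1 h1 /ltnW/H2 h2].
split; rewrite /slt.
- by rewrite opprB addrA addrAC.
- by rewrite scaleN1r -addrA addrC in h2.
Qed.
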